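(* Let $\{(U_{k,i}, V_{k,i}); i \geq 1, k \geq 1\}$ be an array of i.i.d. two-dimensional random vectors. Let $\{a_n; n \geq 1\}$ be a nondecreasing sequence of positive constants such that $$\lim_{n \to \infty} a_{n+1}/a_n = 1 \quad \text{and} \quad \liminf_{n \to \infty} a_{2n}/a_n = b \in (1, \infty].$$ Then for every $c > 0$ and $q > 1$ the following three statements are equivalent: (1) $\sum_{n=1}^{\infty} P\big(\max_{1 \leq i \neq j \leq n} |U_{1,i} V_{1,j}| \geq a_n\big) < \infty$; (2) $\sum_{n=1}^{\infty} P\big(\max_{1 \leq i \neq j \leq cn} |U_{1,i} V_{1,j}| \geq \varepsilon a_n\big) < \infty$ for all $\varepsilon > 0$; (3) $\sum_{n=1}^{\infty} P\big(\max_{1 \leq m \leq q^n} \max_{1 \leq i \neq j \leq cm} |U_{m,i} V_{m,j}| \geq \varepsilon a_{[q^n]}\big) < \infty$ for all $\varepsilon > 0$.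
   Context: $[x]$ denotes the integer part of $x$. *)

(* Defs.v *)
From HB Require Import structures.
From mathcomp Require Import all_boot all_order all_algebra.
From mathcomp Require Import all_classical all_reals all_analysis.
Set Implicit Arguments. Unset Strict Implicit. Unset Printing Implicit Defensive.
Import Order.TTheory GRing.Theory Num.Theory.
Local Open Scope classical_set_scope.
Local Open Scope ring_scope.

Definition rvec {T R : Type} (U V : nat -> nat -> T -> R) (t : nat * nat)
  : T -> R * R := fun w => (U t.1 t.2 w, V t.1 t.2 w).

(* {(U_{k,i},V_{k,i}); i >= 1, k >= 1} is an array of i.i.d. two-dimensional
   random vectors: each component is a real random variable, the vectors
   indexed by (k,i) with k,i >= 1 are mutually independent (product rule over
   every finite subfamily and every Borel sets of R^2) and all have the same
   law on R^2. *)
Definition iid_array {d : measure_display} {T : measurableType d}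
  {R : realType} (P : probability T R) (U V : nat -> nat -> T -> R) : Prop :=
  [/\ (forall k i, measurable_fun setT (U k i) /\ measurable_fun setT (V k i)),
      (forall (s : seq (nat * nat)) (A : nat * nat -> set (R * R)),
          uniq s ->
          (forall t, t \in s -> (0 < t.1)%N /\ (0 < t.2)%N /\ measurable (A t)) ->
          P (\bigcap_(t in [set` s]) (rvec U V t @^-1` A t)) =
          \big[*%E/1%E]_(t <- s) P (rvec U V t @^-1` A t)) &
      (forall (t t' : nat * nat) (A : set (R * R)),
          (0 < t.1)%N -> (0 < t.2)%N -> (0 < t'.1)%N -> (0 < t'.2)%N ->
          measurable A ->
          P (rvec U V t @^-1` A) = P (rvec U V t' @^-1` A))].

(* Main.v *)
Require Import Defs.
From HB Require Import structures.
From mathcomp Require Import all_boot all_order all_algebra.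
From mathcomp Require Import all_classical all_reals all_analysis.
From mathcomp Require Import zify ring lra.
Import Order.TTheory GRing.Theory Num.Theory.
Import numFieldNormedType.Exports.
Local Open Scope classical_set_scope.
Local Open Scope ring_scope.
Module PartA.

Definition Yc (R : realType) := (nat * nat -> R * R)%type.
HB.instance Definition _ (R : realType) := Choice.on (Yc R).
HB.instance Definition _ (R : realType) := isPointed.Build (Yc R) (fun _ => (0,0)).

Definition posp (t : nat * nat) := (0 < t.1)%N && (0 < t.2)%N.

Definition cyl (R : realType) (dl : seq (nat * nat)) : set (set (Yc R)) :=
  [set C | exists A : nat * nat -> set (R * R),
     (forall t, measurable (A t)) /\ C = [set y | forall t, t \in dl -> A t (y t)]].

Definition Ysp (R : realType) dl := g_sigma_algebraType (@cyl R dl).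

Section pf.
Context d d' (T : measurableType d) (T2 : measurableType d') (R : realType)
  (P : {measure set T -> \bar R}) (f : T -> T2) (mf : measurable_fun setT f).
Definition pf : {measure set T2 -> \bar R}.
refine (pushforward P f). exact mf. Defined.
Lemma pfE A : pf A = P (f @^-1` A). Proof. by []. Qed.
End pf.
Arguments pf {d d' T T2 R} P {f} mf.
Arguments pfE {d d' T T2 R} P {f} mf A.

Section Infra.
Context d (T : measurableType d) (R : realType) (P : probability T R)
  (U V : nat -> nat -> T -> R).
Hypothesis mU : forall k i, measurable_fun setT (U k i).
Hypothesis mV : forall k i, measurable_fun setT (V k i).
Hypothesis Hind : forall (s : seq (nat * nat)) (A : nat * nat -> set (R * R)),
          uniq s ->
          (forall t, t \in s -> (0 < t.1)%N /\ (0 < t.2)%N /\ measurable (A t)) ->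
          P (\bigcap_(t in [set` s]) (rvec U V t @^-1` A t)) =
          \big[*%E/1%E]_(t <- s) P (rvec U V t @^-1` A t).
Hypothesis Hid : forall (t t' : nat * nat) (A : set (R * R)),
          (0 < t.1)%N -> (0 < t.2)%N -> (0 < t'.1)%N -> (0 < t'.2)%N ->
          measurable A ->
          P (rvec U V t @^-1` A) = P (rvec U V t' @^-1` A).

Definition xi : T -> Yc R := fun w t => rvec U V t w.

Lemma mrvec t : measurable_fun setT (rvec U V t).
Proof. exact: measurable_fun_pair. Qed.

Lemma pre_meas (dl : seq (nat * nat)) (f : nat * nat -> nat * nat) (A : nat * nat -> set (R * R)) :
  (forall t, measurable (A t)) ->
  measurable [set w | forall t, t \in dl -> A t (rvec U V (f t) w)].
Proof.
move=> mA; elim: dl => [|t dl IH].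
  by rewrite (_ : [set w | _] = setT) //; apply/seteqP; split => w //= _ t.
rewrite (_ : [set w | _] = (rvec U V (f t) @^-1` A t) `&` [set w | forall t, t \in dl -> A t (rvec U V (f t) w)]).
  apply: measurableI => //.
  by rewrite -[X in measurable X]setTI; apply: mrvec.
apply/seteqP; split => w /=.
  move=> H; split; first by apply: H; rewrite inE eqxx.
  by move=> t' Ht'; apply: H; rewrite inE Ht' orbT.
by move=> [H1 H2] t'; rewrite inE => /orP[/eqP->//|]; apply: H2.
Qed.

Lemma xi_meas (dl : seq (nat * nat)) : measurable_fun (setT : set T) (xi : T -> Ysp R dl).
Proof.
apply: (@measurability _ _ T (Ysp R dl) setT xi (@cyl R dl)) => //.
move=> _ [C [A [mA ->]] <-].
rewrite setTI.
exact: (pre_meas dl id A mA).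
Qed.

Lemma xi_pre_meas (dl : seq (nat * nat)) (S : set (Ysp R dl)) : measurable S -> measurable (xi @^-1` S).
Proof. by move=> mS; have := xi_meas dl measurableT S mS; rewrite setTI. Qed.

Lemma cyl_prod (dl : seq (nat * nat)) A : uniq dl -> (forall t, t \in dl -> posp t) ->
  (forall t, measurable (A t)) ->
  P (xi @^-1` [set y | forall t, t \in dl -> A t (y t)]) =
  \big[*%E/1%E]_(t <- dl) P (rvec U V t @^-1` A t).
Proof.
move=> udl pdl mA.
rewrite -Hind //; last first.
  by move=> t /pdl /andP[h1 h2]; split => //; split.
Qed.


Lemma cyl_setI (dl : seq (nat * nat)) : setI_closed (@cyl R dl).
Proof.
move=> _ _ [A [mA ->]] [B [mB ->]].
exists (fun t => A t `&` B t); split; first by move=> t; apply: measurableI.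
apply/seteqP; split => y /=.
  by move=> [H1 H2] t Ht; split; [apply: H1|apply: H2].
by move=> H; split => t Ht; have [] := H t Ht.
Qed.

Lemma cylT (dl : seq (nat * nat)) : @cyl R dl setT.
Proof. by exists (fun=> setT); split => //; apply/seteqP; split. Qed.

Lemma ID (dl : seq (nat * nat)) (phi : nat * nat -> nat * nat) :
  uniq dl -> injective phi -> (forall t, t \in dl -> posp t) ->
  (forall t, t \in dl -> posp (phi t)) ->
  forall S : set (Ysp R dl), <<s @cyl R dl >> S ->
  P (xi @^-1` S) = P ((fun w => xi w \o phi) @^-1` S).
Proof.
move=> udl iphi pdl ppdl.
have mxi := xi_meas dl.
have mxp : measurable_fun (setT : set T) ((fun w => xi w \o phi) : T -> Ysp R dl).
  apply: (@measurability _ _ T (Ysp R dl) setT _ (@cyl R dl)) => //.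
  move=> _ [C [A [mA ->]] <-]; rewrite setTI.
  exact: (pre_meas dl phi A mA).
have Gm : @cyl R dl `<=` @measurable _ (Ysp R dl).
  by move=> A HA; apply: sub_sigma_algebra.
have gc : \bigcup_(k : nat) (fun=> (setT : set (Ysp R dl))) k = setT.
  by apply/seteqP; split => // y _; exists 0%N.
have m1m2 : forall A, @cyl R dl A -> pf P mxi A = pf P mxp A.
  move=> _ [A [mA ->]]; rewrite !pfE.
  etransitivity; first exact: (cyl_prod dl A udl pdl mA).
  pose B' := fun t' => A (nth (0,0)%N dl (index t' (map phi dl))).
  have -> : (fun w => xi w \o phi) @^-1` [set y | forall t, t \in dl -> A t (y t)] =
      xi @^-1` [set y | forall t, t \in map phi dl -> B' t (y t)].
    apply/seteqP; split => w /= H t.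
      by move=> /mapP[t0 Ht0 ->]; rewrite /B' index_map // nth_index //; exact: H.
    by move=> Ht; have := H (phi t) (map_f phi Ht); rewrite /B' index_map // nth_index.
  have upd : uniq (map phi dl) by rewrite map_inj_uniq.
  have ppd : forall t, t \in map phi dl -> posp t.
    by move=> t /mapP[t0 Ht0 ->]; apply: ppdl.
  have E2 := cyl_prod (map phi dl) B' upd ppd (fun t => mA _).
  etransitivity; last exact: (esym E2).
  rewrite big_map; apply: eq_big_seq => t Ht.
  rewrite /B' index_map // nth_index //.
  have /andP[h1 h2] := pdl t Ht; have /andP[h3 h4] := ppdl t Ht.
  exact: Hid.
have m1f : forall k : nat, (pf P mxi ((fun=> setT) k) < +oo)%E.
  move=> k; rewrite pfE; apply: (le_lt_trans (probability_le1 _ _)); last exact: ltry.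
  exact: xi_pre_meas.
move=> S HS.
exact: (@g_sigma_algebra_measure_unique _ R (Ysp R dl) (@cyl R dl) Gm (fun=> setT) (fun=> cylT dl) gc (pf P mxi) (pf P mxp) (@cyl_setI dl) m1m2 m1f S HS).
Qed.


Lemma Gm_dl (dl : seq (nat * nat)) : @cyl R dl `<=` @measurable _ (Ysp R dl).
Proof. by move=> A HA; apply: sub_sigma_algebra. Qed.

Lemma gc_dl (dl : seq (nat * nat)) :
  \bigcup_(k : nat) (fun=> (setT : set (Ysp R dl))) k = setT.
Proof. by apply/seteqP; split => // y _; exists 0%N. Qed.

Lemma uniq_ext (dl : seq (nat * nat)) (B : set T) (mB : measurable B) :
  (forall C, @cyl R dl C -> P (xi @^-1` C `&` B) = (P (xi @^-1` C) * P B)%E) ->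
  forall S : set (Ysp R dl), <<s @cyl R dl >> S ->
  P (xi @^-1` S `&` B) = (P (xi @^-1` S) * P B)%E.
Proof.
move=> H S HS.
have mxi := xi_meas dl.
have r0 : (0 <= fine (P B))%R := fine_ge0 (measure_ge0 P B).
pose m1 := pf (mrestr P mB) mxi.
pose m2 := mscale (NngNum r0) (pf P mxi).
have PBE : P B = (fine (P B))%:E by rewrite fineK // fin_num_measure.
have m1E S0 : m1 S0 = P (xi @^-1` S0 `&` B) by [].
have m2E S0 : m2 S0 = ((fine (P B))%:E * P (xi @^-1` S0))%E by [].
have m1m2 : forall A, @cyl R dl A -> m1 A = m2 A.
  by move=> C HC; rewrite m1E m2E H // -PBE muleC.
have m1f : forall k : nat, (m1 ((fun=> setT) k) < +oo)%E.
  move=> k; rewrite m1E.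
  apply: (le_lt_trans (probability_le1 _ _)); last exact: ltry.
  by apply: measurableI => //; exact: xi_pre_meas.
have E := @g_sigma_algebra_measure_unique _ R (Ysp R dl) (@cyl R dl) (@Gm_dl dl)
  (fun=> setT) (fun=> cylT dl) (gc_dl dl) m1 m2 (@cyl_setI dl) m1m2 m1f S HS.
transitivity (m1 S) => //; transitivity (m2 S); first exact: E.
by rewrite m2E -PBE muleC.
Qed.

Lemma IND1 (d1 d2 : seq (nat * nat)) : uniq (d1 ++ d2) ->
  (forall t, t \in d1 ++ d2 -> posp t) ->
  forall C2, @cyl R d2 C2 -> forall S1 : set (Ysp R d1), <<s @cyl R d1 >> S1 ->
  P (xi @^-1` S1 `&` xi @^-1` C2) = (P (xi @^-1` S1) * P (xi @^-1` C2))%E.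
Proof.
move=> u pd C2 HC2.
have mB : measurable (xi @^-1` C2).
  by case: HC2 => A2 [mA2 ->]; exact: (pre_meas d2 id A2 mA2).
apply: uniq_ext => // _ [A1 [mA1 ->]].
case: HC2 => A2 [mA2 ->].
move: u; rewrite cat_uniq => /and3P[u1 disj u2].
have pd1 : forall t, t \in d1 -> posp t by move=> t Ht; apply: pd; rewrite mem_cat Ht.
have pd2 : forall t, t \in d2 -> posp t by move=> t Ht; apply: pd; rewrite mem_cat Ht orbT.
pose A := fun t => if t \in d1 then A1 t else A2 t.
have mA : forall t, measurable (A t) by move=> t; rewrite /A; case: ifP.
have ucat : uniq (d1 ++ d2) by rewrite cat_uniq u1 disj u2.
have E := cyl_prod (d1 ++ d2) A ucat pd mA.
have -> : xi @^-1` [set y | forall t, t \in d1 -> A1 t (y t)] `&`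
   xi @^-1` [set y | forall t, t \in d2 -> A2 t (y t)] =
   xi @^-1` [set y | forall t, t \in d1 ++ d2 -> A t (y t)].
  apply/seteqP; split => w /=.
    move=> [H1 H2] t; rewrite mem_cat /A; case: ifP => [Ht _|Ht /= Ht2].
      exact: H1.
    exact: H2.
  move=> H; split => t Ht.
    by have := H t; rewrite mem_cat Ht /A Ht => /(_ isT).
  have Hn : t \notin d1 by apply: (hasPn disj).
  by have := H t; rewrite mem_cat Ht orbT /A (negbTE Hn) => /(_ isT).
etransitivity; first exact: E.
rewrite big_cat /=.
congr (_ * _)%E.
  etransitivity; last exact: (esym (cyl_prod d1 A1 u1 pd1 mA1)).
  by apply: eq_big_seq => t Ht; rewrite /A Ht.
etransitivity; last exact: (esym (cyl_prod d2 A2 u2 pd2 mA2)).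
apply: eq_big_seq => t Ht.
have Hn : t \notin d1 by apply: (hasPn disj).
by rewrite /A (negbTE Hn).
Qed.

Lemma IND (d1 d2 : seq (nat * nat)) : uniq (d1 ++ d2) ->
  (forall t, t \in d1 ++ d2 -> posp t) ->
  forall (S1 : set (Ysp R d1)) (S2 : set (Ysp R d2)),
  <<s @cyl R d1 >> S1 -> <<s @cyl R d2 >> S2 ->
  P (xi @^-1` S1 `&` xi @^-1` S2) = (P (xi @^-1` S1) * P (xi @^-1` S2))%E.
Proof.
move=> u pd S1 S2 H1 H2.
have mB1 : measurable (xi @^-1` S1) by exact: (xi_pre_meas d1).
rewrite setIC muleC.
apply: (uniq_ext d2 _ mB1 _ S2 H2) => C HC.
have := IND1 d1 d2 u pd C HC S1 H1.
by rewrite [in X in X -> _]setIC [in X in X -> _]muleC.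
Qed.


Definition Fs (m : nat) (s : seq nat) (x : R) : set (Yc R) :=
  [set y | exists i j, [/\ i \in s, j \in s, i != j &
     x <= `|(y (m, i)).1 * (y (m, j)).2|]].
Definition Ev (m : nat) (s : seq nat) (x : R) : set T :=
  [set w | exists i j, [/\ i \in s, j \in s, i != j & x <= `|U m i w * V m j w|]].
Lemma EvE m s x : Ev m s x = xi @^-1` Fs m s x. Proof. by []. Qed.

Lemma coord1 (dl : seq (nat * nat)) t : t \in dl ->
  measurable_fun setT (fun y : Ysp R dl => (y t).1).
Proof.
move=> Ht _ B mB; apply: sub_sigma_algebra.
exists (fun t' => if t' == t then B `*` setT else setT); split.
  by move=> t'; case: ifP => _ //; apply: measurableX.
apply/seteqP; split => y /=.
  by move=> [_ HB] t' Ht'; case: ifP => [/eqP->|].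
by move=> H; split => //; have := H t Ht; rewrite eqxx; case.
Qed.

Lemma coord2 (dl : seq (nat * nat)) t : t \in dl ->
  measurable_fun setT (fun y : Ysp R dl => (y t).2).
Proof.
move=> Ht _ B mB; apply: sub_sigma_algebra.
exists (fun t' => if t' == t then setT `*` B else setT); split.
  by move=> t'; case: ifP => _ //; apply: measurableX.
apply/seteqP; split => y /=.
  by move=> [_ HB] t' Ht'; case: ifP => [/eqP->|].
by move=> H; split => //; have := H t Ht; rewrite eqxx; case.
Qed.

Lemma Fs_meas (dl : seq (nat * nat)) m s x :
  (forall i, i \in s -> (m, i) \in dl) -> measurable (Fs m s x : set (Ysp R dl)).
Proof.
move=> Hs.
have -> : Fs m s x = \bigcup_(i in [set i | i \in s])
   \bigcup_(j in [set j | j \in s /\ i != j])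
   [set y : Yc R | x <= `|(y (m, i)).1 * (y (m, j)).2|].
  apply/seteqP; split => y /=.
    by move=> [i [j [Hi Hj Hij Hx]]]; exists i => //; exists j.
  by move=> [i Hi [j [Hj Hij] Hx]]; exists i, j; split.
apply: bigcup_measurable => i Hi; apply: bigcup_measurable => j [Hj Hij].
have mg := measurable_realfun.measurable_funM (coord1 dl _ (Hs i Hi)) (coord2 dl _ (Hs j Hj)).
have mh := measurableT_comp (@measurable_realfun.normr_measurable R setT) mg.
have := mh measurableT `[x, +oo[%classic (measurable_itv _).
rewrite setTI; congr measurable; apply/seteqP; split => y /=;
  by rewrite in_itv /= andbT.
Qed.

Lemma Ev_meas m s x : measurable (Ev m s x).
Proof.
rewrite EvE.
apply: (xi_pre_meas [seq (m, i) | i <- s]).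
by apply: Fs_meas => i Hi; apply: map_f.
Qed.


Lemma Ev_ID m m' (s : seq nat) (psi : nat -> nat) x : uniq s -> injective psi ->
  (0 < m)%N -> (0 < m')%N -> (forall i, i \in s -> 0 < i)%N ->
  (forall i, i \in s -> 0 < psi i)%N ->
  P (Ev m' (map psi s) x) = P (Ev m s x).
Proof.
move=> us ipsi m0 m'0 ps pps.
pose tr k := if k == m then m' else if k == m' then m else k.
have trK : involutive tr.
  by move=> k; rewrite /tr; do ![case: eqP => /=]; congruence.
pose phi (t : nat * nat) := (tr t.1, psi t.2).
have iphi : injective phi.
  move=> [a b] [a' b'] [h1 h2].
  by rewrite (inv_inj trK h1) (ipsi _ _ h2).
pose dl := [seq (m, i) | i <- s].
have udl : uniq dl by rewrite map_inj_uniq // => a b [].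
have pdl : forall t, t \in dl -> posp t.
  by move=> t /mapP[i Hi ->]; rewrite /posp /= m0 ps.
have ppdl : forall t, t \in dl -> posp (phi t).
  by move=> t /mapP[i Hi ->]; rewrite /posp /phi /tr /= eqxx m'0 pps.
have mF : <<s @cyl R dl >> (Fs m s x).
  by apply: (Fs_meas dl) => i Hi; apply: map_f.
have E := ID dl phi udl iphi pdl ppdl _ mF.
transitivity (P ((fun w => xi w \o phi) @^-1` Fs m s x)); last exact: (esym E).
congr (P _); apply/seteqP; split => w /=.
  move=> [i [j [/mapP[i0 Hi0 ->] /mapP[j0 Hj0 ->] Hij Hx]]].
  exists i0, j0; split => //.
    by apply: contraNneq Hij => ->.
  by rewrite /xi /rvec /phi /tr /= eqxx.
move=> [i [j [Hi Hj Hij Hx]]].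
exists (psi i), (psi j); split.
- exact: map_f.
- exact: map_f.
- by rewrite inj_eq.
- by move: Hx; rewrite /xi /rvec /phi /tr /= eqxx.
Qed.


Definition NoEv (ms : seq nat) (s : seq nat) (x : R) : set T :=
  [set w | forall m, m \in ms -> ~ Ev m s x w].

Lemma NoF_meas (dl : seq (nat * nat)) (ms s : seq nat) x :
  (forall m i, m \in ms -> i \in s -> (m, i) \in dl) ->
  measurable ([set y | forall m, m \in ms -> ~ Fs m s x y] : set (Ysp R dl)).
Proof.
elim: ms => [|m ms IH] H.
  by rewrite (_ : [set y | _] = setT) //; apply/seteqP; split => y //= _ m.
rewrite (_ : [set y | _] = ~` Fs m s x `&` [set y | forall m, m \in ms -> ~ Fs m s x y]).
  apply: measurableI.
    apply: measurableC; apply: Fs_meas => i Hi; apply: H => //.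
    by rewrite inE eqxx.
  by apply: IH => m' i Hm' Hi; apply: H => //; rewrite inE Hm' orbT.
apply/seteqP; split => y /=.
  move=> Hy; split; first by apply: Hy; rewrite inE eqxx.
  by move=> m' Hm'; apply: Hy; rewrite inE Hm' orbT.
by move=> [H1 H2] m'; rewrite inE => /orP[/eqP->//|]; apply: H2.
Qed.

Lemma rows_indep (ms s : seq nat) x : uniq ms -> uniq s ->
  (forall m, m \in ms -> 0 < m)%N -> (forall i, i \in s -> 0 < i)%N ->
  P (NoEv ms s x) = \big[*%E/1%E]_(m <- ms) (1 - P (Ev m s x))%E.
Proof.
elim: ms => [|m ms IH] ums us pms ps.
  rewrite big_nil (_ : NoEv _ _ _ = setT) ?probability_setT //.
  by apply/seteqP; split => w //= _ m.
move: ums; rewrite cons_uniq => /andP[mnms ums].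
pose d1 := [seq (m, i) | i <- s].
pose d2 := [seq (m', i) | m' <- ms, i <- s].
have u : uniq (d1 ++ d2).
  rewrite cat_uniq; apply/and3P; split.
  - by rewrite map_inj_uniq // => a b [].
  - apply/hasPn => t /allpairsP[[m' i] [/= Hm' Hi ->]].
    apply/negP => /mapP[j Hj [e _]].
    by move: mnms; rewrite -e Hm'.
  - by rewrite allpairs_uniq // => [[a b] [c e]] _ _ /=.
have pd : forall t, t \in d1 ++ d2 -> posp t.
  move=> t; rewrite mem_cat => /orP[/mapP[i Hi ->]|/allpairsP[[m' i] [/= Hm' Hi ->]]].
    by rewrite /posp /= (ps i Hi) pms // inE eqxx.
  by rewrite /posp /= (ps i Hi) pms // inE Hm' orbT.
have H1 : measurable (~` Fs m s x : set (Ysp R d1)).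
  by apply: measurableC; apply: Fs_meas => i Hi; apply: map_f.
have H2 : measurable ([set y | forall m, m \in ms -> ~ Fs m s x y] : set (Ysp R d2)).
  by apply: NoF_meas => m' i Hm' Hi; apply/allpairsP; exists (m', i).
have E := IND d1 d2 u pd _ _ H1 H2.
have -> : NoEv (m :: ms) s x = xi @^-1` (~` Fs m s x) `&`
    xi @^-1` [set y | forall m, m \in ms -> ~ Fs m s x y].
  apply/seteqP; split => w /=.
    move=> Hw; split; first by apply: Hw; rewrite inE eqxx.
    by move=> m' Hm'; apply: Hw; rewrite inE Hm' orbT.
  by move=> [Hw1 Hw2] m'; rewrite inE => /orP[/eqP->//|]; apply: Hw2.
etransitivity; first exact: E.
rewrite big_cons; congr (_ * _)%E.
  by rewrite -probability_setC //; exact: Ev_meas.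
rewrite -IH //.
- by move=> m' Hm'; apply: pms; rewrite inE Hm' orbT.
Qed.


Definition prb (A : set T) : R := fine (P A).

Lemma prbE A : measurable A -> P A = (prb A)%:E.
Proof. by move=> mA; rewrite /prb fineK // fin_num_measure. Qed.

Lemma prb_ge0 A : 0 <= prb A.
Proof. exact: fine_ge0. Qed.

Lemma prb_le1 A : measurable A -> prb A <= 1.
Proof. by move=> mA; rewrite -lee_fin -prbE //; apply: probability_le1. Qed.

Lemma prb_le A B : measurable A -> measurable B -> A `<=` B -> prb A <= prb B.
Proof. by move=> mA mB AB; rewrite -lee_fin -!prbE //; apply: le_measure; rewrite ?inE. Qed.

Lemma prbC A : measurable A -> prb (~` A) = 1 - prb A.
Proof.
move=> mA; have := probability_setC P mA; rewrite prbE //; last exact: measurableC.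
by rewrite prbE // => -[].
Qed.

Lemma union_meas (I : eqType) (F : I -> set T) (l : seq I) :
  (forall i, measurable (F i)) -> measurable [set w | exists i, i \in l /\ F i w].
Proof.
move=> mF; elim: l => [|i l IH].
  by rewrite (_ : [set w | _] = set0) //; apply/seteqP; split => w //= [i []].
have -> : [set w | exists i0, i0 \in i :: l /\ F i0 w] =
    F i `|` [set w | exists i, i \in l /\ F i w].
  apply/seteqP; split => w /=.
    move=> [i0 []]; rewrite inE => /orP[/eqP-> ?|Hi0 ?]; first by left.
    by right; exists i0.
  move=> [?|[i0 [Hi0 ?]]]; first by exists i; rewrite inE eqxx.
  by exists i0; rewrite inE Hi0 orbT.
exact: measurableU.
Qed.

Lemma union_bound (I : eqType) (F : I -> set T) (l : seq I) (E : set T) :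
  (forall i, measurable (F i)) -> measurable E ->
  E `<=` [set w | exists i, i \in l /\ F i w] ->
  prb E <= \sum_(i <- l) prb (F i).
Proof.
move=> mF mE HE.
have : measurable [set w | exists i, i \in l /\ F i w] /\
   prb [set w | exists i, i \in l /\ F i w] <= \sum_(i <- l) prb (F i).
  elim: l {HE} => [|i l [IH1 IH2]].
    rewrite big_nil (_ : [set w | _] = set0); last first.
      by apply/seteqP; split => w //= [i []].
    by rewrite /prb measure0.
  have -> : [set w | exists i0, i0 \in i :: l /\ F i0 w] =
      F i `|` [set w | exists i, i \in l /\ F i w].
    apply/seteqP; split => w /=.
      move=> [i0 []]; rewrite inE => /orP[/eqP-> ?|Hi0 ?]; first by left.
      by right; exists i0.
    move=> [?|[i0 [Hi0 ?]]]; first by exists i; rewrite inE eqxx.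
    by exists i0; rewrite inE Hi0 orbT.
  split; first exact: measurableU.
  rewrite big_cons.
  have h : (P (F i `|` [set w | exists i, i \in l /\ F i w]) <=
     P (F i) + P [set w | exists i, i \in l /\ F i w])%E := measureU2 P (mF i) IH1.
  move: h; rewrite !prbE //; last exact: measurableU.
  rewrite -EFinD lee_fin => h.
  by apply: (le_trans h); rewrite lerD2l.
move=> [m1 h]; apply: le_trans h.
exact: prb_le.
Qed.

Lemma Ev_sub m s s' x x' : {subset s <= s'} -> x' <= x -> Ev m s x `<=` Ev m s' x'.
Proof.
move=> ss' xx w [i [j [Hi Hj Hij Hx]]]; exists i, j; split => //.
- exact: ss'.
- exact: ss'.
- exact: le_trans Hx.
Qed.

Definition pr (K : nat) (x : R) := prb (Ev 1 (iota 1 K) x).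

Lemma pr_ge0 K x : 0 <= pr K x. Proof. exact: prb_ge0. Qed.
Lemma pr_le1 K x : pr K x <= 1. Proof. exact/prb_le1/Ev_meas. Qed.

Lemma pr_mono K K' x x' : (K <= K')%N -> x' <= x -> pr K x <= pr K' x'.
Proof.
move=> KK' xx; apply: prb_le; try exact: Ev_meas.
apply: Ev_sub => // i; rewrite !mem_iota => /andP[h1 h2].
by rewrite h1 /=; apply: leq_trans h2 _; rewrite leq_add2l.
Qed.

Definition psi (a b L i : nat) : nat := (if i <= L then a * L + i else b * L + i - L)%N.

Lemma psi_inj a b L : (a < b)%N -> injective (psi a b L).
Proof.
move=> ab.
have h : (a * L + L <= b * L)%N by rewrite -[X in (X <= _)%N]mulSnr leq_mul2r ab orbT.
move=> i j; rewrite /psi; case: ifP => hi; case: ifP => hj; lia.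
Qed.

Lemma mem_psi a b L i : (a < b)%N ->
  ((a * L < i <= a * L + L) || (b * L < i <= b * L + L))%N ->
  i \in map (psi a b L) (iota 1 (2 * L)).
Proof.
move=> ab /orP[/andP[h1 h2]|/andP[h1 h2]]; apply/mapP.
  exists (i - a * L)%N; first by rewrite mem_iota; lia.
  by rewrite /psi; case: ifP; lia.
exists (i - b * L + L)%N; first by rewrite mem_iota; lia.
by rewrite /psi; case: ifP; lia.
Qed.

Lemma blk_ex L i : (0 < L)%N -> (1 <= i <= 4 * L)%N ->
  exists k, (k < 4)%N /\ (k * L < i <= k * L + L)%N.
Proof.
move=> L0 /andP[i1 i4].
exists ((i - 1) %/ L)%N; split.
  by rewrite ltn_divLR //; lia.
have := divn_eq (i - 1)%N L; have := ltn_mod (i - 1)%N L; rewrite L0 => hm hd.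
lia.
Qed.

Definition l6 : seq (nat * nat) := [:: (0,1); (0,2); (0,3); (1,2); (1,3); (2,3)]%N.

Lemma l6_mem a b : (a < b)%N -> (b < 4)%N -> (a, b) \in l6.
Proof.
by case: a => [|[|[|[|a]]]]; case: b => [|[|[|[|b]]]].
Qed.

Lemma block4 L x : (0 < L)%N -> pr (4 * L) x <= 6%:R * pr (2 * L) x.
Proof.
move=> L0.
pose F (k : nat * nat) := Ev 1 (map (psi k.1 k.2 L) (iota 1 (2 * L))) x.
have pF : forall k, k \in l6 -> prb (F k) = pr (2 * L) x.
  move=> [a b] Hk.
  have ab : (a < b)%N by have /allP/(_ _ Hk) : all (fun k : nat * nat => (k.1 < k.2)%N) l6 by [].
  rewrite /prb /pr /F /= (Ev_ID 1 1) //.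
  - exact: iota_uniq.
  - exact: psi_inj.
  - by move=> i; rewrite mem_iota; lia.
  - by move=> i; rewrite mem_iota /psi; case: ifP; lia.
have h : pr (4 * L) x <= \sum_(k <- l6) prb (F k).
  apply: union_bound; [move=> k; exact: Ev_meas|exact: Ev_meas|].
  move=> w [i [j [Hi Hj Hij Hx]]].
  move: Hi Hj; rewrite !mem_iota => Hi Hj.
  have hi4 : (1 <= i <= 4 * L)%N by lia.
  have hj4 : (1 <= j <= 4 * L)%N by lia.
  have [ki [ki4 hki]] := @blk_ex L i L0 hi4.
  have [kj [kj4 hkj]] := @blk_ex L j L0 hj4.
  have [a [b [ab [b4 [hi hj]]]]] : exists a b, [/\ (a < b)%N, (b < 4)%N,
      ((a * L < i <= a * L + L) || (b * L < i <= b * L + L))%N &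
      ((a * L < j <= a * L + L) || (b * L < j <= b * L + L))%N].
    case: (ltngtP ki kj) => h.
    - by exists ki, kj; split; lia.
    - by exists kj, ki; split; lia.
    - subst kj; case: (ltnP ki 3) => h3.
        by exists ki, ki.+1; split; lia.
      have e : ki = 3%N by lia.
      by subst ki; exists 2%N, 3%N; split; lia.
  exists (a, b); split; first exact: l6_mem.
  exists i, j; split => //; exact: mem_psi.
rewrite (eq_big_seq (fun=> pr (2 * L) x)) in h; last by move=> k Hk; apply: pF.
rewrite /l6 !big_cons big_nil in h.
lra.
Qed.


Lemma block_iter L x j : (0 < L)%N -> pr (2 ^ j.+1 * L) x <= 6%:R ^+ j * pr (2 * L) x.
Proof.
move=> L0; elim: j => [|j IH]; first by rewrite expn1 expr0 mul1r.
have L1 : (0 < 2 ^ j * L)%N by rewrite muln_gt0 expn_gt0.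
have e1 : (2 ^ j.+2 * L = 4 * (2 ^ j * L))%N by rewrite !expnS; ring.
have e2 : (2 ^ j.+1 * L = 2 * (2 ^ j * L))%N by rewrite !expnS; ring.
rewrite e1; apply: (le_trans (block4 _ x L1)).
rewrite -e2 exprS -mulrA; apply: ler_wpM2l => //.
Qed.

Lemma block_gen K K' x j : (2 <= K)%N -> (K' <= 2 ^ j * K)%N ->
  pr K' x <= 6%:R ^+ j.+1 * pr K x.
Proof.
move=> K2 HK'.
pose L := (K %/ 2)%N.
have hd := divn_eq K 2; have hm := ltn_mod K 2.
have L0 : (0 < L)%N by rewrite /L; lia.
have h4 : (K <= 4 * L)%N by rewrite /L; lia.
have h2 : (2 * L <= K)%N by rewrite /L; lia.
have HK'' : (K' <= 2 ^ j.+2 * L)%N.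
  apply: (leq_trans HK'); rewrite (_ : (2 ^ j.+2 * L = 2 ^ j * (4 * L))%N).
    by rewrite leq_mul2l h4 orbT.
  by rewrite !expnS; ring.
apply: (le_trans (pr_mono _ _ _ _ HK'' (lexx x))).
apply: (le_trans (block_iter L x j.+1 L0)).
apply: ler_wpM2l; first by rewrite exprn_ge0.
exact: pr_mono.
Qed.


Lemma pr_row m K x : (0 < m)%N -> prb (Ev m (iota 1 K) x) = pr K x.
Proof.
move=> m0; rewrite /pr /prb -{1}(map_id (iota 1 K)) (Ev_ID 1 m) //.
- exact: iota_uniq.
- by move=> i; rewrite mem_iota; lia.
- by move=> i; rewrite mem_iota; lia.
Qed.

Lemma NoEv_meas (ms s : seq nat) x : measurable (NoEv ms s x).
Proof.
elim: ms => [|m ms IH].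
  by rewrite (_ : NoEv _ _ _ = setT) //; apply/seteqP; split => w //= _ m.
rewrite (_ : NoEv _ _ _ = ~` Ev m s x `&` NoEv ms s x).
  by apply: measurableI => //; apply: measurableC; exact: Ev_meas.
apply/seteqP; split => w /=.
  move=> Hw; split; first by apply: Hw; rewrite inE eqxx.
  by move=> m' Hm'; apply: Hw; rewrite inE Hm' orbT.
by move=> [Hw1 Hw2] m'; rewrite inE => /orP[/eqP->//|]; apply: Hw2.
Qed.

Lemma lower_rows (ms : seq nat) K x : uniq ms -> (forall m, m \in ms -> 0 < m)%N ->
  1 - (1 - pr K x) ^+ (size ms) <= prb [set w | exists m, m \in ms /\ Ev m (iota 1 K) x w].
Proof.
move=> ums pms.
have -> : [set w | exists m, m \in ms /\ Ev m (iota 1 K) x w] = ~` NoEv ms (iota 1 K) x.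
  apply/seteqP; split => w /=.
    by move=> [m [Hm He]] H; apply: (H m Hm).
  move=> H; apply: contra_notP H => H m Hm He; apply: H; by exists m.
rewrite prbC; last exact: NoEv_meas.
have ps : forall i, i \in iota 1 K -> (0 < i)%N by move=> i; rewrite mem_iota; lia.
have E := rows_indep ms (iota 1 K) x ums (iota_uniq _ _) pms ps.
have : prb (NoEv ms (iota 1 K) x) = (1 - pr K x) ^+ size ms.
  rewrite /prb E.
  rewrite (eq_big_seq (fun=> (1 - pr K x)%:E)); last first.
    move=> m Hm; rewrite prbE; last exact: Ev_meas.
    by rewrite pr_row ?pms.
  rewrite prodEFin /= big_const_seq /=.
  elim: ms {ums pms E} => [|m ms IH] //=.
  by rewrite IH exprS.
by move=> ->.
Qed.

End Infra.

End PartA.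
Import PartA.

Module PartB.

Section Anal.
Context (R : realType).

Definition summ (f : nat -> R) := exists M, forall N, \sum_(0 <= n < N) f n <= M.

Lemma sum_ge0 (f : nat -> R) a b : (forall n, 0 <= f n) -> 0 <= \sum_(a <= n < b) f n.
Proof. by move=> f0; apply: sumr_ge0 => n _. Qed.

Lemma sum_mono (f : nat -> R) N N' : (forall n, 0 <= f n) -> (N <= N')%N ->
  \sum_(0 <= n < N) f n <= \sum_(0 <= n < N') f n.
Proof.
move=> f0 NN'; rewrite (big_cat_nat (leq0n N) NN') /=.
by rewrite lerDl; apply: sum_ge0.
Qed.

Lemma bridge (f : nat -> R) : (forall n, 0 <= f n) ->
  ((\sum_(1 <= n <oo) (f n)%:E < +oo)%E <-> summ f).
Proof.
move=> f0; split.
  move=> Hlt.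
  set S := (\sum_(1 <= n <oo) (f n)%:E)%E in Hlt.
  have S0 : (0 <= S)%E by apply: nneseries_ge0 => n _; rewrite lee_fin.
  have Sfin : S \is a fin_num by rewrite ge0_fin_numE.
  exists (f 0%N + fine S) => N.
  apply: (le_trans (sum_mono _ _ _ f0 (leqnSn N))).
  rewrite big_nat_recl //= lerD2l.
  have h := @nneseries_lim_ge R (fun n => (f n)%:E) xpredT 1%N N.+1.
  rewrite -lee_fin fineK //.
  have -> : (\sum_(0 <= i < N) f i.+1)%:E = (\sum_(1 <= i < N.+1) (f i)%:E)%E.
    by rewrite -sumEFin big_add1.
  by apply: h => n _ _; rewrite lee_fin.
move=> [M HM].
apply: (le_lt_trans (y := M%:E)); last exact: ltry.
apply: lime_le.
  by apply: is_cvg_nneseries => n _ _; rewrite lee_fin.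
apply: nearW => N.
rewrite sumEFin lee_fin.
apply: le_trans (HM N).
case: N => [|N]; first by rewrite big_geq.
by rewrite (big_cat_nat (leq0n 1) (ltn0Sn N)) /= lerDr big_nat1.
Qed.

Lemma summ_le (f g : nat -> R) (C : R) (n0 : nat) : (forall n, 0 <= f n) ->
  (forall n, 0 <= g n) -> 0 <= C ->
  (forall n, (n0 <= n)%N -> f n <= C * g n) -> summ g -> summ f.
Proof.
move=> f0 g0 C0 H [M HM].
exists (\sum_(0 <= n < n0) f n + C * M) => N.
apply: (le_trans (sum_mono _ _ _ f0 (leq_maxl N n0))).
rewrite (big_cat_nat (leq0n n0) (leq_maxr N n0)) /= lerD2l.
apply: (@le_trans _ _ (\sum_(n0 <= n < maxn N n0) C * g n)).
  rewrite !big_nat; apply: ler_sum => n /andP[h1 _]; exact: H.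
rewrite -mulr_sumr; apply: ler_wpM2l => //.
apply: le_trans (HM (maxn N n0)).
rewrite (big_cat_nat (leq0n n0) (leq_maxr N n0)) /= lerDr.
exact: sum_ge0.
Qed.

Lemma summ_shift (f : nat -> R) : (forall n, 0 <= f n) ->
  summ (fun n => f n.+1) -> summ f.
Proof.
move=> f0 [M HM]; exists (f 0%N + M) => N.
apply: (le_trans (sum_mono _ _ _ f0 (leqnSn N))).
by rewrite big_nat_recl // lerD2l.
Qed.

Lemma sum_div (g : nat -> R) (D N : nat) : (0 < D)%N ->
  \sum_(0 <= n < D * N) g (n %/ D)%N = D%:R * \sum_(0 <= m < N) g m.
Proof.
move=> D0; elim: N => [|N IH]; first by rewrite muln0 !big_geq // mulr0.
rewrite (big_cat_nat (leq0n (D * N)) (_ : (D * N <= D * N.+1)%N)); last first.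
  by rewrite leq_mul2l leqnSn orbT.
rewrite /= IH big_nat_recr //= mulrDr; congr (_ + _).
rewrite (eq_big_nat _ _ (F2 := fun=> g N)); last first.
  move=> i /andP[h1 h2]; congr g.
  have -> : i = (N * D + (i - D * N))%N by lia.
  rewrite divnMDl // divn_small ?addn0 //.
  rewrite mulnS in h2; lia.
rewrite sumr_const_nat mulr_natl; congr (_ *+ _).
rewrite mulnS; lia.
Qed.

Lemma summ_div (g : nat -> R) (D : nat) : (0 < D)%N -> (forall n, 0 <= g n) ->
  summ g -> summ (fun n => g (n %/ D)%N).
Proof.
move=> D0 g0 [M HM]; exists (D%:R * M) => N.
apply: (@le_trans _ _ (\sum_(0 <= n < D * N) g (n %/ D)%N)).
  apply: sum_mono => //; by rewrite leq_pmull.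
rewrite sum_div //; apply: ler_wpM2l => //.
Qed.

Lemma sum_blocks (f : nat -> R) (Q : nat -> nat) N : (forall n, Q n <= Q n.+1)%N ->
  \sum_(Q 0%N <= m < Q N) f m = \sum_(0 <= n < N) \sum_(Q n <= m < Q n.+1) f m.
Proof.
move=> Qmono; elim: N => [|N IH]; first by rewrite !big_geq.
have QN : (Q 0%N <= Q N)%N.
  elim: N {IH} => // N IH; exact: leq_trans IH (Qmono N).
by rewrite (big_cat_nat QN (Qmono N)) /= IH big_nat_recr.
Qed.

Lemma summ_eventually_small (f : nat -> R) (eps : R) : (forall n, 0 <= f n) ->
  0 < eps -> summ f -> exists n1, forall n, (n1 <= n)%N -> f n < eps.
Proof.
move=> f0 e0 [M HM].
apply: contrapT => Hn.
have H : forall n1, exists n, (n1 <= n)%N /\ eps <= f n.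
  move=> n1; apply: contrapT => H; apply: Hn; exists n1 => n hn.
  rewrite ltNge; apply/negP => hf; apply: H; by exists n.
have K : forall k : nat, exists N, k%:R * eps <= \sum_(0 <= n < N) f n.
  elim => [|k [N HN]]; first by exists 0%N; rewrite mul0r big_geq.
  have [n [hn hf]] := H N.
  exists n.+1.
  rewrite (big_cat_nat (leq0n N) (leqW hn)) /= big_nat_recr /=; last exact: hn.
  rewrite mulrSr mulrDl mul1r; apply: lerD => //.
  rewrite addrC -[X in X <= _]addr0; apply: lerD => //; exact: sum_ge0.
have M0 : 0 <= M by apply: le_trans (HM 0%N); rewrite big_geq.
have [N HN] := K (Num.trunc (M / eps)).+1.
have := le_trans HN (HM N).
have := truncnS_gt (M / eps).
rewrite ltr_pdivrMr // => h1 h2.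
by have := lt_le_trans h1 h2; rewrite ltxx.
Qed.

Lemma bern (p : R) (D : nat) : 0 <= p -> 1 + D%:R * p <= (1 + p) ^+ D.
Proof.
move=> p0; elim: D => [|D IH]; first by rewrite mul0r addr0 expr0.
rewrite exprS.
apply: (@le_trans _ _ ((1 + p) * (1 + D%:R * p))); last first.
  by apply: ler_wpM2l => //; rewrite addr_ge0.
rewrite mulrDl mul1r mulrDr mulr1 -natr1 mulrDl mul1r.
have : 0 <= p * (D%:R * p) by apply: mulr_ge0 => //; apply: mulr_ge0.
lra.
Qed.

Lemma one_minus_pow (p : R) (D : nat) : 0 <= p <= 1 ->
  D%:R * p / (1 + D%:R * p) <= 1 - (1 - p) ^+ D.
Proof.
move=> /andP[p0 p1].
have Dp0 : 0 <= D%:R * p by apply: mulr_ge0.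
have d0 : 0 < 1 + D%:R * p by lra.
have h1 : (1 - p) ^+ D * (1 + D%:R * p) <= 1.
  apply: (@le_trans _ _ ((1 - p) ^+ D * (1 + p) ^+ D)).
    apply: ler_wpM2l; first by apply: exprn_ge0; lra.
    exact: bern.
  rewrite -exprMn; apply: exprn_ile1.
    by apply: mulr_ge0; lra.
  have : 0 <= p * p by apply: mulr_ge0.
  nra.
have e : D%:R * p / (1 + D%:R * p) = 1 - 1 / (1 + D%:R * p).
  by field; lra.
rewrite e lerD2l lerN2 ler_pdivlMr //.
Qed.

Lemma summ_from_pow (u t : nat -> R) : (forall n, 0 <= u n) -> (forall n, 0 <= t n) ->
  (forall n, u n / (1 + u n) <= t n) -> summ t -> summ u.
Proof.
move=> u0 t0 H st.
have e0 : 0 < 2^-1 :> R by rewrite invr_gt0.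
have [n1 Hn1] := @summ_eventually_small t (2^-1) t0 e0 st.
apply: (@summ_le u t 2 n1) => //.
move=> n hn.
have h1 := H n; have h2 := Hn1 n hn; have h3 := u0 n.
have d0 : 0 < 1 + u n by lra.
have : u n <= t n * (1 + u n) by rewrite -ler_pdivrMr.
have : u n / (1 + u n) < 2^-1 by exact: le_lt_trans h2.
rewrite ltr_pdivrMr // => h4 h5.
have : u n <= 1 by lra.
nra.
Qed.


Lemma summ_shift_fwd (f : nat -> R) : (forall n, 0 <= f n) ->
  summ f -> summ (fun n => f n.+1).
Proof.
move=> f0 [M HM]; exists M => N.
apply: le_trans (HM N.+1).
by rewrite [X in _ <= X]big_nat_recl // lerDr.
Qed.

Lemma pow_big (b : R) : 1 < b -> forall X : R, exists n0, forall n, (n0 <= n)%N -> X <= b ^+ n.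
Proof.
move=> b1 X.
exists (Num.trunc (`|X| / (b - 1))).+1 => n hn.
have b0 : 0 < b - 1 by lra.
have h1 := truncnS_gt (`|X| / (b - 1)).
have h2 : ((Num.trunc (`|X| / (b - 1))).+1%:R <= n%:R :> R) by rewrite ler_nat.
have h3 : `|X| / (b - 1) < n%:R by lra.
rewrite ltr_pdivrMr // in h3.
have h4 := bern (b - 1) n (ltW b0).
rewrite (_ : 1 + (b - 1) = b) in h4; last by lra.
have h5 : X <= `|X| by exact: ler_norm.
have : 0 <= n%:R * (b - 1) by apply: mulr_ge0 => //; lra.
lra.
Qed.

End Anal.

End PartB.
Import PartB.

Module PartC.

Section Seqs.
Context (R : realType) (a : nat -> R) (c q : R).
Hypothesis apos : forall n, (0 < n)%N -> 0 < a n.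
Hypothesis amono : forall n, (0 < n)%N -> a n <= a n.+1.
Hypothesis c0 : 0 < c.
Hypothesis q1 : 1 < q.

Lemma a_mono n m : (0 < n)%N -> (n <= m)%N -> a n <= a m.
Proof.
move=> n0; elim: m => [|m IH]; first by lia.
rewrite leq_eqVlt => /orP[/eqP->//|h].
apply: (le_trans (IH _)); [lia|apply: amono; lia].
Qed.

Definition K (n : nat) : nat := Num.truncn (c * n%:R).
Definition Q (n : nat) : nat := Num.truncn (q ^+ n).

Lemma cn_ge0 n : 0 <= c * n%:R. Proof. by apply: mulr_ge0 => //; exact: ltW. Qed.
Lemma qn_ge1 n : 1 <= q ^+ n. Proof. by apply: exprn_ege1; exact: ltW. Qed.
Lemma qn_ge0 n : 0 <= q ^+ n. Proof. by apply: exprn_ge0; apply: (le_trans ler01 (ltW q1)). Qed.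

Lemma K_le n : (K n)%:R <= c * n%:R. Proof. by rewrite truncn_le cn_ge0. Qed.
Lemma K_gt n : c * n%:R - 1 < (K n)%:R.
Proof. have := truncnS_gt (c * n%:R); rewrite -/(K n) -natr1; lra. Qed.
Lemma K_mono n m : (n <= m)%N -> (K n <= K m)%N.
Proof. by move=> nm; apply: le_truncn; apply: ler_wpM2l; [exact: ltW|rewrite ler_nat]. Qed.
Lemma memK i n : (i <= K n)%N = (i%:R <= c * n%:R).
Proof. by rewrite truncn_ge_nat // cn_ge0. Qed.

Lemma Q_le n : (Q n)%:R <= q ^+ n. Proof. by rewrite truncn_le qn_ge0. Qed.
Lemma Q_gt n : q ^+ n - 1 < (Q n)%:R.
Proof. have := truncnS_gt (q ^+ n); rewrite -/(Q n) -natr1; lra. Qed.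
Lemma Q_ge1 n : (1 <= Q n)%N. Proof. by rewrite truncn_gt0 qn_ge1. Qed.
Lemma Q_mono n : (Q n <= Q n.+1)%N.
Proof.
apply: le_truncn; rewrite exprS; apply: ler_peMl; [exact: qn_ge0|exact: ltW].
Qed.
Lemma Q_monoW n m : (n <= m)%N -> (Q n <= Q m)%N.
Proof.
elim: m => [|m IH]; first by rewrite leqn0 => /eqP->.
rewrite leq_eqVlt => /orP[/eqP->//|h]; apply: leq_trans (IH h) (Q_mono m).
Qed.
Lemma memQ m n : (m <= Q n)%N = (m%:R <= q ^+ n).
Proof. by rewrite truncn_ge_nat // qn_ge0. Qed.

Ltac hyps := have q1' : 1 < q := q1; have c0' : 0 < c := c0.

Lemma big_props : exists n0, forall n, (n0 <= n)%N ->
  [/\ 2 <= q ^+ n * (q - 1), 2 * (c + 3) <= c * q ^+ n & 2 <= q ^+ n].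
Proof.
hyps.
have [n0 Hn0] := @pow_big R q q1 (2 / (q - 1) + 2 * (c + 3) / c + 2).
exists n0 => n hn; have h := Hn0 n hn.
have q0 : 0 < q - 1 by lra.
have e1 : 0 <= 2 / (q - 1) by apply: divr_ge0 => //; exact: ltW.
have h2 : 0 <= 2 * (c + 3) by lra.
have e2 : 0 <= 2 * (c + 3) / c by apply: divr_ge0 h2 (ltW c0').
split.
- have h' : 2 / (q - 1) <= q ^+ n by lra.
  by rewrite ler_pdivrMr in h'.
- have h' : 2 * (c + 3) / c <= q ^+ n by lra.
  rewrite ler_pdivrMr // in h'; lra.
- lra.
Qed.


Lemma D_lb n : 2 <= q ^+ n * (q - 1) ->
  (q - 1) * (Q n.+1)%:R <= 2 * q * (Q n.+1 - Q n)%:R.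
Proof.
hyps => hy.
rewrite natrB ?Q_mono //.
have h1 := Q_le n.+1; have h2 := Q_gt n.+1; have h3 := Q_le n.
rewrite exprS in h1 h2.
set y := q ^+ n in hy h1 h2 h3 *.
set A := (Q n.+1)%:R in h1 h2 *; set B := (Q n)%:R in h3 *.
have t1 : 0 <= (q + 1) * (A - (q * y - 1)) by apply: mulr_ge0; lra.
have t2 : 0 <= q * (y * (q - 1) - 2) by apply: mulr_ge0; lra.
have t3 : 0 <= q * (y - B) by apply: mulr_ge0; lra.
lra.
Qed.

Lemma K_ratio r n : 2 * q ^+ 2 <= (2 ^ r)%:R -> 2 * (c + 3) <= c * q ^+ n ->
  (2 <= K (Q n))%N /\ (K (Q n.+2) <= 2 ^ r * K (Q n))%N.
Proof.
hyps => hr hy.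
have k1 := K_gt (Q n); have k2 := K_le (Q n.+2).
have q2 := Q_le n.+2; have q0 := Q_gt n.
rewrite !exprS mulrA in q2.
set y := q ^+ n in hy q2 q0 *.
set Kn := (K (Q n))%:R in k1 *.
have Kn2 : 2 < Kn.
  have t : 0 <= c * ((Q n)%:R - (y - 1)) by apply: mulr_ge0; lra.
  lra.
split; first by rewrite -(ltr_nat R); lra.
rewrite -(ler_nat R) natrM.
have t1 : 0 <= c * (q * q * y - (Q n.+2)%:R) by apply: mulr_ge0; lra.
have t2 : c * y < 2 * Kn.
  have t : 0 <= c * ((Q n)%:R - (y - 1)) by apply: mulr_ge0; lra.
  lra.
have t3 : 0 <= (q * q) * (2 * Kn - c * y) by apply: mulr_ge0; [apply: mulr_ge0|]; lra.
have t4 : 0 <= ((2 ^ r)%:R - 2 * q ^+ 2) * Kn by apply: mulr_ge0; lra.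
rewrite expr2 in t4.
lra.
Qed.

Lemma Q3 n : 2 <= q ^+ n * (q - 1) -> 2 <= q ^+ n ->
  (q - 1) * (Q n.+2)%:R <= 4 * q ^+ 2 * (Q n.+1 - Q n)%:R.
Proof.
hyps => hy hy2.
have d := D_lb n hy.
rewrite natrB ?Q_mono // in d *.
have h1 := Q_gt n.+1; have h2 := Q_le n.+2.
rewrite exprS in h1; rewrite !exprS mulrA in h2.
set y := q ^+ n in hy hy2 h1 h2 *.
set A := (Q n.+1)%:R in d h1 *; set B := (Q n)%:R in d *.
have t1 : 0 <= (q - 1) * (q * q * y - (Q n.+2)%:R) by apply: mulr_ge0; lra.
have qy : 2 <= q * y.
  have : 0 <= (q - 1) * y by apply: mulr_ge0; lra.
  lra.
have t2 : 0 <= (q * (q - 1)) * (2 * A - q * y) by apply: mulr_ge0; [apply: mulr_ge0|]; lra.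
have t3 : 0 <= (2 * q) * (2 * q * (A - B) - (q - 1) * A) by apply: mulr_ge0; lra.
rewrite expr2; lra.
Qed.

Lemma r_exists : exists r, 2 * q ^+ 2 <= (2 ^ r)%:R.
Proof.
have two1 : (1 < 2 :> R) by rewrite ltr1n.
have [n0 Hn0] := @pow_big R 2 two1 (2 * q ^+ 2).
by exists n0; rewrite natrX; apply: Hn0.
Qed.

Lemma Q_unb (X : nat) : exists N, (X <= Q N)%N.
Proof.
have [n0 Hn0] := @pow_big R q q1 X%:R.
by exists n0; rewrite memQ; apply: Hn0.
Qed.

Lemma liminf_ext : (1 < limn_einf (fun n => (a n.*2 / a n)%:E))%E ->
  exists b, 1 < b /\ exists N0, (0 < N0)%N /\ forall n, (N0 <= n)%N -> b * a n <= a n.*2.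
Proof.
set u := fun n => (a n.*2 / a n)%:E => hl.
have [b [b1 bl]] : exists b : R, 1 < b /\ (b%:E < limn_einf u)%E.
  move: hl; case: (limn_einf u) => [l| |] //.
  - rewrite lte_fin => l1; exists ((1 + l) / 2); split; first lra.
    by rewrite lte_fin; lra.
  - by move=> _; exists 2; split; [lra|exact: ltry].
rewrite limn_einf_lim in bl.
have [N _ HN] := @lte_lim R (einfs u) b (@nondecreasing_einfs R u) (@is_cvg_einfs R u) bl.
exists b; split => //; exists N.+1; split => // n hn.
have h1 : (b%:E <= einfs u N)%E by apply: HN => /=.
have h2 : (einfs u N <= u n)%E.
  by apply: ereal_inf_lbound; exists n => //=; lia.
have := le_trans h1 h2; rewrite /u lee_fin ler_pdivlMr //.
by apply: apos; lia.
Qed.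

Lemma a_pow b N0 : (0 < N0)%N -> 0 <= b ->
  (forall n, (N0 <= n)%N -> b * a n <= a n.*2) ->
  forall j N, (N0 <= N)%N -> b ^+ j * a N <= a (2 ^ j * N).
Proof.
move=> N00 b0 H; elim => [|j IH] N hN; first by rewrite expr0 mul1r mul1n.
have hj : (N0 <= 2 ^ j * N)%N by apply: leq_trans hN _; rewrite leq_pmull // expn_gt0.
rewrite exprS -mulrA.
apply: (le_trans (ler_wpM2l b0 (IH N hN))).
have -> : (2 ^ j.+1 * N = (2 ^ j * N).*2)%N by rewrite -mul2n expnS mulnA.
exact: H.
Qed.

End Seqs.

End PartC.
Import PartC.

Module PartD.

Section Main.
Context d (T : measurableType d) (R : realType) (P : probability T R)
  (U V : nat -> nat -> T -> R).
Hypothesis mU : forall k i, measurable_fun setT (U k i).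
Hypothesis mV : forall k i, measurable_fun setT (V k i).
Hypothesis Hind : forall (s : seq (nat * nat)) (A : nat * nat -> set (R * R)),
          uniq s ->
          (forall t, t \in s -> (0 < t.1)%N /\ (0 < t.2)%N /\ measurable (A t)) ->
          P (\bigcap_(t in [set` s]) (rvec U V t @^-1` A t)) =
          \big[*%E/1%E]_(t <- s) P (rvec U V t @^-1` A t).
Hypothesis Hid : forall (t t' : nat * nat) (A : set (R * R)),
          (0 < t.1)%N -> (0 < t.2)%N -> (0 < t'.1)%N -> (0 < t'.2)%N ->
          measurable A ->
          P (rvec U V t @^-1` A) = P (rvec U V t' @^-1` A).
Variables (a : nat -> R) (c q : R).
Hypothesis apos : forall n, (0 < n)%N -> 0 < a n.
Hypothesis amono : forall n, (0 < n)%N -> a n <= a n.+1.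
Hypothesis c0 : 0 < c.
Hypothesis q1 : 1 < q.

Local Notation pr := (pr d T R P U V).
Local Notation prb := (prb d T R P).
Local Notation Ev := (Ev d T R U V).
Local Notation K := (K R c).
Local Notation Q := (Q R q).

Let prm K K' x x' := pr_mono d T R P U V mU mV K K' x x'.
Let blk K K' x j := block_gen d T R P U V mU mV Hind Hid K K' x j.
Let prow m K x := pr_row d T R P U V mU mV Hind Hid m K x.
Let lrows ms K x := lower_rows d T R P U V mU mV Hind Hid ms K x.
Let Evm m s x := Ev_meas d T R U V mU mV m s x.
Let pr0 K x := pr_ge0 d T R P U V K x.
Let pr1 K x := pr_le1 d T R P U V mU mV K x.
Let mQ m n := memQ R q q1 m n.
Let mK i n := memK R c c0 i n.
Let amon n m := a_mono R a c q amono c0 q1 n m.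

Ltac hyps := have q1' : 1 < q := q1; have c0' : 0 < c := c0.

Definition f1 n := pr n (a n).
Definition f2 eps n := pr (K n) (eps * a n).
Definition E3 eps n : set T := [set w | exists m i j : nat, ((1 <= m)%N /\ m%:R <= q ^+ n /\
                   (1 <= i)%N /\ i%:R <= c * m%:R /\
                   (1 <= j)%N /\ j%:R <= c * m%:R /\ i != j /\
                   eps * a (Num.truncn (q ^+ n)) <= `|U m i w * V m j w|)%R ].
Definition t3 eps n := prb (E3 eps n).

Lemma E3E eps n : E3 eps n =
  [set w | exists m, m \in iota 1 (Q n) /\ Ev m (iota 1 (K m)) (eps * a (Q n)) w].
Proof.
apply/seteqP; split => w /=.
  move=> [m [i [j [m1 [mq [i1 [ic [j1 [jc [ij hx]]]]]]]]]].
  rewrite -mQ in mq; rewrite -mK in ic; rewrite -mK in jc.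
  exists m; split; first by rewrite mem_iota; lia.
  by exists i, j; split => //; rewrite mem_iota; lia.
move=> [m [hm [i [j [hi hj ij hx]]]]].
move: hm hi hj; rewrite !mem_iota => hm hi hj.
have mq : (m <= Q n)%N by lia.
have ic : (i <= K m)%N by lia.
have jc : (j <= K m)%N by lia.
rewrite mQ in mq; rewrite mK in ic; rewrite mK in jc.
exists m, i, j; do !split => //; lia.
Qed.

Lemma E3_meas eps n : measurable (E3 eps n).
Proof. by rewrite E3E; apply: union_meas => m; apply: Evm. Qed.

Lemma t3_le eps n : 0 <= eps -> t3 eps n <= (Q n)%:R * pr (K (Q n)) (eps * a (Q n)).
Proof.
move=> e0.
rewrite /t3 E3E.
apply: le_trans (union_bound d T R P _ (fun m => Ev m (iota 1 (K m)) (eps * a (Q n))) (iota 1 (Q n)) _ _ _ _) _.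
- by move=> m; apply: Evm.
- by rewrite -E3E; apply: E3_meas.
- by [].
rewrite (_ : iota 1 (Q n) = index_iota 1 (Q n).+1); last by rewrite /index_iota subSS subn0.
apply: le_trans (_ : \sum_(1 <= m < (Q n).+1) pr (K (Q n)) (eps * a (Q n)) <= _).
  rewrite !big_nat; apply: ler_sum => m /andP[m1 m2].
  rewrite prow //; apply: prm => //; apply: K_mono => //; lia.
by rewrite sumr_const_nat subSS subn0 mulr_natl.
Qed.


Lemma f2_ge0 eps n : 0 <= f2 eps n. Proof. exact: pr0. Qed.
Lemma t3_ge0 eps n : 0 <= t3 eps n. Proof. exact: prb_ge0. Qed.

Lemma dirC eps : 0 < eps -> summ R (f2 eps) -> summ R (t3 eps).
Proof.
hyps => e0 sf.
have [r hr] := r_exists R q.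
have [n0 Hn0] := big_props R c q c0 q1.
pose g n := \sum_(Q n <= m < Q n.+1) f2 eps m.
have g0 : forall n, 0 <= g n by move=> n; apply: sum_ge0 => m; apply: f2_ge0.
have sg : summ R g.
  case: sf => M HM; exists M => N.
  rewrite /g -sum_blocks; last exact: Q_mono.
  apply: le_trans (HM (Q N)).
  rewrite [X in _ <= X](big_cat_nat (leq0n (Q 0)) (Q_monoW R q q1 _ _ (leq0n N))) /= lerDr.
  by apply: sum_ge0 => m; apply: f2_ge0.
apply: summ_shift; first by move=> n; apply: t3_ge0.
have q0 : 0 < q - 1 by lra.
pose C1 := 2 * q / (q - 1).
have C10 : 0 <= C1 by apply: divr_ge0; lra.
pose S := (6 : R) ^+ r.+1.
have S0 : 0 <= S by apply: exprn_ge0.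
apply: (summ_le R (fun n => t3 eps n.+1) g (C1 * S) n0) => //.
- by move=> n; apply: t3_ge0.
- exact: mulr_ge0.
move=> n hn.
have [h1 h2 h3] := Hn0 n hn.
have [K2 Kr] := K_ratio R c q c0 q1 r n hr h2.
set x := eps * a (Q n.+1).
set A := ((Q n.+1)%:R : R).
set Dn := ((Q n.+1 - Q n)%:R : R).
set p1 := pr (K (Q n.+1)) x.
set p0 := pr (K (Q n)) x.
have A0 : 0 <= A by apply: ler0n.
have ht : t3 eps n.+1 <= A * p1 by apply: t3_le; lra.
have hp : p1 <= S * p0.
  apply: (blk _ _ _ _ K2).
  apply: leq_trans Kr; apply: (K_mono R c c0); exact: (Q_mono R q q1).
have hg : Dn * p0 <= g n.
  have -> : Dn * p0 = \sum_(Q n <= m < Q n.+1) p0 by rewrite sumr_const_nat mulr_natl.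
  apply: ler_sum_nat => m /andP[m1 m2].
  apply: prm.
    exact: (K_mono R c c0 _ _ m1).
  apply: ler_wpM2l; first exact: ltW.
  exact: (amon _ _ (leq_trans (Q_ge1 R q q1 n) m1) (ltnW m2)).
have hD := D_lb R c q c0 q1 n h1.
have s2 : A <= C1 * Dn.
  rewrite /C1 mulrAC ler_pdivlMr // mulrC.
  exact: hD.
have s1 : A * p1 <= A * (S * p0) by apply: ler_wpM2l.
have s3 : A * (S * p0) <= (C1 * Dn) * (S * p0).
  by apply: ler_wpM2r => //; apply: mulr_ge0 => //; apply: pr0.
have s4 : (C1 * Dn) * (S * p0) = (C1 * S) * (Dn * p0).
  by rewrite mulrA -(mulrA C1) (mulrC Dn) !mulrA.
have s5 : (C1 * S) * (Dn * p0) <= (C1 * S) * g n.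
  by apply: ler_wpM2l => //; apply: mulr_ge0.
apply: (le_trans ht); apply: (le_trans s1); apply: (le_trans s3).
by rewrite s4.
Qed.


Lemma dirD eps : 0 < eps -> summ R (t3 eps) -> summ R (f2 eps).
Proof.
hyps => e0 st.
have st' := summ_shift_fwd R (t3 eps) (t3_ge0 eps) st.
have [r hr] := r_exists R q.
have [n0 Hn0] := big_props R c q c0 q1.
pose pi n := pr (K (Q n)) (eps * a (Q n.+1)).
pose u n := ((Q n.+1 - Q n)%:R : R) * pi n.
have u0 : forall n, 0 <= u n by move=> n; apply: mulr_ge0; [apply: ler0n|apply: pr0].
have su : summ R u.
  apply: (summ_from_pow R u (fun n => t3 eps n.+1)) => //.
    by move=> n; apply: t3_ge0.
  move=> n.
  have hp : 0 <= pi n <= 1 by rewrite pr0 pr1.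
  apply: le_trans (one_minus_pow R (pi n) (Q n.+1 - Q n) hp) _.
  pose ms := iota (Q n).+1 (Q n.+1 - Q n).
  have ums : uniq ms := iota_uniq _ _.
  have pms : forall m, m \in ms -> (0 < m)%N by move=> m; rewrite mem_iota => /andP[h _]; exact: leq_ltn_trans (leq0n _) h.
  have := lrows ms (K (Q n)) (eps * a (Q n.+1)) ums pms.
  rewrite size_iota => h; apply: le_trans h _.
  apply: prb_le.
  - by apply: union_meas => m; apply: Evm.
  - exact: E3_meas.
  rewrite E3E => w [m [hm hw]]; exists m; split.
    move: hm; rewrite !mem_iota => /andP[h1 h2]; apply/andP; split.
      exact: leq_ltn_trans (leq0n _) h1.
    by rewrite add1n; move: h2; rewrite addSn subnKC // (Q_mono R q q1).
  apply: Ev_sub hw => //.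
    move=> i; rewrite !mem_iota => /andP[i1 i2]; rewrite i1 /=.
    apply: leq_trans i2 _; rewrite leq_add2l; apply: (K_mono R c c0).
    by move: hm; rewrite mem_iota => /andP[h1 _]; exact: ltnW.
pose g n := \sum_(Q n.+1 <= m < Q n.+2) f2 eps m.
have g0 : forall n, 0 <= g n by move=> n; apply: sum_ge0 => m; apply: f2_ge0.
have q0 : 0 < q - 1 by lra.
pose C3 := 4 * q ^+ 2 / (q - 1).
have C30 : 0 <= C3 by apply: divr_ge0; [apply: mulr_ge0 => //; apply: exprn_ge0|]; lra.
pose S := (6 : R) ^+ r.+1.
have S0 : 0 <= S by apply: exprn_ge0.
have sg : summ R g.
  apply: (summ_le R g u (C3 * S) n0) => //.
    exact: mulr_ge0.
  move=> n hn.
  have [h1 h2 h3] := Hn0 n hn.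
  have [K2 Kr] := K_ratio R c q c0 q1 r n hr h2.
  set p0 := pi n.
  set A := ((Q n.+2)%:R : R).
  set Dn := ((Q n.+1 - Q n)%:R : R).
  have p00 : 0 <= p0 by apply: pr0.
  have hg : g n <= ((Q n.+2 - Q n.+1)%:R : R) * (S * p0).
    have -> : ((Q n.+2 - Q n.+1)%:R : R) * (S * p0) =
      \sum_(Q n.+1 <= m < Q n.+2) (S * p0) by rewrite sumr_const_nat mulr_natl.
    apply: ler_sum_nat => m /andP[m1 m2].
    apply: le_trans (_ : pr (K (Q n.+2)) (eps * a (Q n.+1)) <= _).
      apply: prm.
        exact: (K_mono R c c0 _ _ (ltnW m2)).
      apply: ler_wpM2l; first exact: ltW.
      exact: (amon _ _ (Q_ge1 R q q1 n.+1) m1).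
    exact: (blk _ _ _ _ K2 Kr).
  have hA : ((Q n.+2 - Q n.+1)%:R : R) <= A.
    by rewrite ler_nat leq_subr.
  have hQ3 := Q3 R c q c0 q1 n h1 h3.
  have s2 : A <= C3 * Dn.
    rewrite /C3 mulrAC ler_pdivlMr // mulrC.
    exact: hQ3.
  apply: (le_trans hg).
  have s1 : ((Q n.+2 - Q n.+1)%:R : R) * (S * p0) <= A * (S * p0).
    by apply: ler_wpM2r => //; apply: mulr_ge0.
  apply: (le_trans s1).
  have s3 : A * (S * p0) <= (C3 * Dn) * (S * p0).
    by apply: ler_wpM2r => //; apply: mulr_ge0.
  apply: (le_trans s3).
  have -> : (C3 * Dn) * (S * p0) = (C3 * S) * (Dn * p0).
    by rewrite mulrA -(mulrA C3) (mulrC Dn) !mulrA.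
  by [].
case: sg => Mg HMg.
exists (\sum_(0 <= m < Q 1) f2 eps m + Mg) => N.
have [N1 HN1] := Q_unb R q q1 N.
apply: le_trans (sum_mono R (f2 eps) N (Q N1.+1) (f2_ge0 eps) _) _.
  exact: leq_trans HN1 (Q_mono R q q1 N1).
rewrite (big_cat_nat (leq0n (Q 1)) (Q_monoW R q q1 _ _ (ltn0Sn N1))) /= lerD2l.
have := sum_blocks R (f2 eps) (fun n => Q n.+1) N1 (fun n => Q_mono R q q1 n.+1).
move=> /= ->.
exact: HMg.
Qed.


Lemma f1_ge0 n : 0 <= f1 n. Proof. exact: pr0. Qed.

Lemma dirA : (1 < limn_einf (fun n => (a n.*2 / a n)%:E))%E ->
  summ R f1 -> forall eps, 0 < eps -> summ R (f2 eps).
Proof.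
hyps => hl sf eps e0.
have [b [b1 [N0 [N00 HN0]]]] := liminf_ext R a c q apos c0 q1 hl.
have [k Hk] := pow_big R b b1 (1 / eps).
have bk : 1 / eps <= b ^+ k := Hk k (leqnn k).
have two1 : (1 < 2 :> R) by rewrite ltr1n.
have [r Hr] := pow_big R 2 two1 (c * 2 ^+ k.+1).
have hr : c * 2 ^+ k.+1 <= 2 ^+ r := Hr r (leqnn r).
pose D := (2 ^ k)%N.
have hD : (0 < D)%N by rewrite expn_gt0.
apply: (summ_le R (f2 eps) (fun n => f1 (n %/ D)%N) (6 ^+ r.+1) (2 ^ k.+1 * N0)).
- by move=> n; apply: f2_ge0.
- by move=> n; apply: f1_ge0.
- exact: exprn_ge0.
- move=> n hn.
  set N := (n %/ D)%N.
  have eD : (2 ^ k.+1 * N0 = (2 * N0) * D)%N by rewrite expnS mulnAC.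
  have hN : (2 * N0 <= N)%N by rewrite /N leq_divRL // -eD.
  have N1 : (1 < N)%N.
    apply: leq_trans hN; by rewrite -[X in (X <= _)%N]muln1 leq_pmul2l.
  have NN0 : (N0 <= N)%N by apply: leq_trans _ hN; exact: leq_pmull.
  have aN0 : 0 < a N by apply: apos; exact: ltnW N1.
  have aN : a N <= eps * a n.
    have h1 := a_pow R a b N0 N00 (ltW (lt_trans ltr01 b1)) HN0 k N NN0.
    have h2 : a (2 ^ k * N) <= a n.
      apply: amon; first by rewrite muln_gt0 expn_gt0 (ltnW N1).
      by rewrite mulnC; exact: leq_trunc_div.
    have h3 : 1 <= eps * b ^+ k by move: bk; rewrite ler_pdivrMr // mulrC.
    have h4 : a N <= (eps * b ^+ k) * a N by rewrite ler_peMl // ltW.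
    apply: (le_trans h4); rewrite -mulrA; apply: ler_wpM2l; first exact: ltW.
    exact: le_trans h1 h2.
  have hn2 : (n <= 2 ^ k.+1 * N)%N.
    apply: ltnW; apply: (leq_trans (ltn_ceil n hD)).
    rewrite -/N expnS mulnAC leq_mul2r; apply/orP; right.
    by rewrite mul2n -addnn -add1n leq_add2r; exact: ltnW N1.
  have KN : (K n <= 2 ^ r * N)%N.
    rewrite -(ler_nat R) natrM natrX.
    apply: le_trans (K_le R c c0 n) _.
    have hn' : (n%:R : R) <= 2 ^+ k.+1 * N%:R.
      by rewrite -natrX -natrM ler_nat.
    apply: le_trans (ler_wpM2l (ltW c0) hn') _.
    rewrite mulrA; apply: ler_wpM2r => //; apply: ler0n.
  apply: le_trans (_ : pr (K n) (a N) <= _).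
    exact: prm (leqnn _) aN.
  exact: (blk _ _ _ _ N1 KN).
- exact: summ_div R f1 D hD f1_ge0 sf.
Qed.

Lemma dirB : summ R (f2 1) -> summ R f1.
Proof.
hyps => sf.
have two1 : (1 < 2 :> R) by rewrite ltr1n.
have [r Hr] := pow_big R 2 two1 (2 / c).
have hr : 2 / c <= 2 ^+ r := Hr r (leqnn r).
have hr' : 2 <= c * 2 ^+ r by move: hr; rewrite ler_pdivrMr // mulrC.
pose n1 := (Num.truncn (4 / c)).+1.
apply: (summ_le R f1 (f2 1) (6 ^+ r.+1) n1).
- exact: f1_ge0.
- by move=> n; apply: f2_ge0.
- exact: exprn_ge0.
move=> n hn.
have h1 := truncnS_gt (4 / c).
have h2 : (n1%:R : R) <= n%:R by rewrite ler_nat.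
have h3 : 4 / c < n%:R by apply: lt_le_trans h1 h2.
rewrite ltr_pdivrMr // in h3.
have {}h3 : 4 < n%:R * c := h3.
have kg : c * n%:R - 1 < (K n)%:R := K_gt R c n.
set s := (2 : R) ^+ r.
have s0 : 0 <= s by apply: exprn_ge0.
have K1 : (1 < K n)%N.
  by rewrite -(ltr_nat R); lra.
have Kn : (n <= 2 ^ r * K n)%N.
  rewrite -(ler_nat R) natrM natrX -/s.
  have t1' : 0 <= (K n)%:R - (c * n%:R - 1) by lra.
  have t2' : 0 <= c * n%:R - 2 by lra.
  have t3' : 0 <= c * s - 2 by rewrite /s; lra.
  have t1 : 0 <= s * ((K n)%:R - (c * n%:R - 1)) := mulr_ge0 s0 t1'.
  have t2 : 0 <= s * (c * n%:R - 2) := mulr_ge0 s0 t2'.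
  have t3 : 0 <= (c * s - 2) * n%:R := mulr_ge0 t3' (ler0n _ _).
  lra.
rewrite /f1 /f2 mul1r.
exact: (blk _ _ _ _ K1 Kn).
exact: sf.
Qed.


Lemma iff_lt (A B : \bar R) : A = B -> ((A < +oo)%E <-> (B < +oo)%E).
Proof. by move=> ->. Qed.

Lemma main_sec : (1 < limn_einf (fun n => (a n.*2 / a n)%:E))%E ->
  let S1 := (\sum_(1 <= n <oo)
      P [set w | exists i j : nat, ((1 <= i <= n)%N /\ (1 <= j <= n)%N /\ i != j /\
                   a n <= `|U 1%N i w * V 1%N j w|)%R ] < +oo)%E in
  let S2 := forall eps : R, 0 < eps -> (\sum_(1 <= n <oo)
      P [set w | exists i j : nat, ((1 <= i)%N /\ i%:R <= c * n%:R /\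
                   (1 <= j)%N /\ j%:R <= c * n%:R /\ i != j /\
                   eps * a n <= `|U 1%N i w * V 1%N j w|)%R ] < +oo)%E in
  let S3 := forall eps : R, 0 < eps -> (\sum_(1 <= n <oo)
      P [set w | exists m i j : nat, ((1 <= m)%N /\ m%:R <= q ^+ n /\
                   (1 <= i)%N /\ i%:R <= c * m%:R /\
                   (1 <= j)%N /\ j%:R <= c * m%:R /\ i != j /\
                   eps * a (Num.truncn (q ^+ n)) <= `|U m i w * V m j w|)%R ]
      < +oo)%E in
  (S1 <-> S2) /\ (S2 <-> S3).
Proof.
move=> hl S1 S2 S3.
have e1 : S1 <-> summ R f1.
  rewrite -(bridge R f1 f1_ge0); apply: iff_lt; apply: eq_eseriesr => n _.
  rewrite /f1 -(prow 1) // -prbE; last exact: Evm.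
  congr (P _); apply/seteqP; split => w /=.
    move=> [i [j [hi [hj [ij hx]]]]]; exists i, j; split => //; rewrite mem_iota; lia.
  move=> [i [j [hi hj ij hx]]]; move: hi hj; rewrite !mem_iota => hi hj.
  by exists i, j; do !split => //; lia.
have e2 : forall eps, 0 < eps -> ((\sum_(1 <= n <oo)
      P [set w | exists i j : nat, ((1 <= i)%N /\ i%:R <= c * n%:R /\
                   (1 <= j)%N /\ j%:R <= c * n%:R /\ i != j /\
                   eps * a n <= `|U 1%N i w * V 1%N j w|)%R ] < +oo)%E <-> summ R (f2 eps)).
  move=> eps e0.
  rewrite -(bridge R (f2 eps) (f2_ge0 eps)); apply: iff_lt; apply: eq_eseriesr => n _.
  rewrite /f2 -(prow 1) // -prbE; last exact: Evm.
  congr (P _); apply/seteqP; split => w /=.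
    move=> [i [j [i1 [ic [j1 [jc [ij hx]]]]]]]; exists i, j; split => //.
      by rewrite mem_iota; move: ic; rewrite -mK => ic; lia.
    by rewrite mem_iota; move: jc; rewrite -mK => jc; lia.
  move=> [i [j [hi hj ij hx]]]; move: hi hj; rewrite !mem_iota => hi hj.
  have ic : (i <= K n)%N by lia.
  have jc : (j <= K n)%N by lia.
  rewrite mK in ic; rewrite mK in jc.
  by exists i, j; do !split => //; lia.
have e3 : forall eps, 0 < eps -> ((\sum_(1 <= n <oo)
      P [set w | exists m i j : nat, ((1 <= m)%N /\ m%:R <= q ^+ n /\
                   (1 <= i)%N /\ i%:R <= c * m%:R /\
                   (1 <= j)%N /\ j%:R <= c * m%:R /\ i != j /\
                   eps * a (Num.truncn (q ^+ n)) <= `|U m i w * V m j w|)%R ]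
      < +oo)%E <-> summ R (t3 eps)).
  move=> eps e0.
  rewrite -(bridge R (t3 eps) (t3_ge0 eps)); apply: iff_lt; apply: eq_eseriesr => n _.
  exact: (prbE d T R P (E3 eps n) (E3_meas eps n)).
split.
  rewrite /S1 /S2 e1; split.
    by move=> h eps e0; rewrite e2 //; exact: dirA.
  move=> h; apply: dirB; rewrite -e2; last exact: ltr01.
  by apply: h; exact: ltr01.
rewrite /S2 /S3; split => h eps e0.
  by rewrite e3 //; apply: dirC => //; rewrite -e2 //; apply: h.
by rewrite e2 //; apply: dirD => //; rewrite -e3 //; apply: h.
Qed.

End Main.

End PartD.
Import PartD.

Theorem lemma3p1 (d : measure_display) (T : measurableType d) (R : realType)
  (P : probability T R) (U V : nat -> nat -> T -> R) (a : nat -> R) :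
  iid_array P U V ->
  (forall n, (0 < n)%N -> 0 < a n) ->
  (forall n, (0 < n)%N -> a n <= a n.+1) ->
  (a n.+1 / a n) @[n --> \oo] --> (1 : R) ->
  (1 < limn_einf (fun n => (a n.*2 / a n)%:E))%E ->
  forall (c q : R), 0 < c -> 1 < q ->
  let S1 := (\sum_(1 <= n <oo)
      P [set w | exists i j : nat, ((1 <= i <= n)%N /\ (1 <= j <= n)%N /\ i != j /\
                   a n <= `|U 1%N i w * V 1%N j w|)%R ] < +oo)%E in
  let S2 := forall eps : R, 0 < eps -> (\sum_(1 <= n <oo)
      P [set w | exists i j : nat, ((1 <= i)%N /\ i%:R <= c * n%:R /\
                   (1 <= j)%N /\ j%:R <= c * n%:R /\ i != j /\
                   eps * a n <= `|U 1%N i w * V 1%N j w|)%R ] < +oo)%E in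
  let S3 := forall eps : R, 0 < eps -> (\sum_(1 <= n <oo)
      P [set w | exists m i j : nat, ((1 <= m)%N /\ m%:R <= q ^+ n /\
                   (1 <= i)%N /\ i%:R <= c * m%:R /\
                   (1 <= j)%N /\ j%:R <= c * m%:R /\ i != j /\
                   eps * a (Num.truncn (q ^+ n)) <= `|U m i w * V m j w|)%R ]
      < +oo)%E in
  (S1 <-> S2) /\ (S2 <-> S3).
Proof.
move=> [mUV Hind Hid] apos amono _ hlim c q c0 q1.
have mU : forall k i, measurable_fun setT (U k i) := fun k i => (mUV k i).1.
have mV : forall k i, measurable_fun setT (V k i) := fun k i => (mUV k i).2.
exact: (main_sec d T R P U V mU mV Hind Hid a c q apos amono c0 q1 hlim).
Qed.
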